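(* Let $G$ be a graph (of arbitrary cardinality) which is a lexicographic sum, indexed by a finite graph, of graphs each of which is a clique or an independent set. Then every graph equimorphic to $G$ is isomorphic to $G$; that is, $G$ has exactly one sibling up to isomorphism.
   Context: Graphs are undirected and loopless. $G$ embeds into $G'$ if $G$ is isomorphic to an induced subgraph of $G'$; $G,G'$ are equimorphic if each embeds into the other. If $H$ is a graph on a vertex set $J$ and $(L_j)_{j\in J}$ are graphs, the lexicographic sum of the $L_j$ indexed by $H$ is the graph on the disjoint union of the vertex sets of the $L_j$ in which two vertices of the same $L_j$ are adjacent iff they are adjacent in $L_j$, and $x\in L_i$, $y\in L_j$ with $i\neq j$ are adjacent iff $\{i,j\}$ is an edge of $H$. The cliques and independent sets may be infinite. *)

(* Defs.v *)
From mathcomp Require Import all_boot.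
Set Implicit Arguments. Unset Strict Implicit. Unset Printing Implicit Defensive.

Definition is_graph (V : Type) (E : V -> V -> Prop) : Prop :=
  (forall x y, E x y -> E y x) /\ (forall x, ~ E x x).

Definition embeds (V : Type) (E : V -> V -> Prop)
                  (V' : Type) (E' : V' -> V' -> Prop) : Prop :=
  exists f : V -> V', injective f /\ forall x y, E x y <-> E' (f x) (f y).

Definition equimorphic (V : Type) (E : V -> V -> Prop)
                       (V' : Type) (E' : V' -> V' -> Prop) : Prop :=
  embeds E E' /\ embeds E' E.

Definition isomorphic (V : Type) (E : V -> V -> Prop)
                      (V' : Type) (E' : V' -> V' -> Prop) : Prop :=
  exists f : V -> V', bijective f /\ forall x y, E x y <-> E' (f x) (f y).

Definition is_clique (V : Type) (E : V -> V -> Prop) : Prop :=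
  forall x y, x <> y -> E x y.

Definition is_independent (V : Type) (E : V -> V -> Prop) : Prop :=
  forall x y, ~ E x y.

Inductive lexsum_adj (J : Type) (H : J -> J -> Prop) (L : J -> Type)
    (EL : forall j, L j -> L j -> Prop) : {j : J & L j} -> {j : J & L j} -> Prop :=
| lexsum_in (j : J) (x y : L j) :
    EL j x y -> lexsum_adj H EL (existT L j x) (existT L j y)
| lexsum_out (i j : J) (x : L i) (y : L j) :
    i <> j -> H i j -> lexsum_adj H EL (existT L i x) (existT L j y).

(* Main.v *)
Require Import Defs.
From mathcomp Require Import all_boot all_fingroup.
From mathcomp Require Import boolp.
From Stdlib Require Import Eqdep_dec.
Set Implicit Arguments. Unset Strict Implicit. Unset Printing Implicit Defensive.

Definition tw (V : Type) (E : V -> V -> Prop) (x y : V) : Prop :=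
  forall z, z <> x -> z <> y -> (E x z <-> E y z).

Lemma tw_refl V (E : V -> V -> Prop) x : tw E x x.
Proof. by move=> z; split. Qed.

Lemma tw_sym V (E : V -> V -> Prop) x y : tw E x y -> tw E y x.
Proof. by move=> h z zy zx; split; move/(h z zx zy). Qed.

Lemma tw_trans V (E : V -> V -> Prop) x y z :
  (forall a b, E a b -> E b a) -> tw E x y -> tw E y z -> tw E x z.
Proof.
move=> Es hxy hyz.
have Ei : forall a b, E a b <-> E b a by move=> a b; split; apply: Es.
have [->|nxy] := pselect (x = y); first by [].
have [<-|nyz] := pselect (y = z); first by [].
have [<-|nxz] := pselect (x = z); first exact: tw_refl.
move=> w wx wz.
have [->|wy] := pselect (w = y).
  apply: iff_trans (Ei _ _) _.
  apply: iff_trans (hyz x _ _) _; [by move=> e; apply: nxy|by move=> e; apply: nxz|].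
  apply: iff_trans (Ei _ _) _.
  apply: iff_trans (hxy z _ _) _; [by move=> e; apply: nxz|by move=> e; apply: nyz|].
  exact: Ei.
exact: iff_trans (hxy w wx wy) (hyz w wy wz).
Qed.

Lemma tw_edge V (E : V -> V -> Prop) a b c d :
  (forall a b, E a b -> E b a) ->
  tw E a c -> tw E b d -> a <> b -> c <> d -> (E a b <-> E c d).
Proof.
move=> Es hac hbd nab ncd.
have Ei : forall a b, E a b <-> E b a by move=> x y; split; apply: Es.
have [ebc|nbc] := pselect (b = c).
  subst c.
  have [ead|nad] := pselect (a = d); first by subst d; apply: Ei.
  apply: iff_trans (Ei _ _) _.
  apply: iff_trans (hbd a _ _) _; [by move=> e; apply: nab|by []|].
  apply: iff_trans (Ei _ _) _.
  exact: hac d (fun e => nad (esym e)) (fun e => ncd (esym e)).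
apply: iff_trans (hac b _ _) _; [by move=> e; apply: nab; rewrite e|by []|].
apply: iff_trans (Ei _ _) _.
apply: iff_trans (hbd c _ _) _; [by move=> e; apply: nbc; rewrite e|by []|].
exact: Ei.
Qed.
Lemma inj_pairJ (J : finType) (L : J -> Type) (j : J) (x y : L j) :
  existT L j x = existT L j y -> x = y.
Proof. apply: inj_pair2_eq_dec => a b; case: (eqVneq a b) => [->|n]; [left|right] => //; exact/eqP. Qed.

Lemma lex_in (J : finType) (H : J -> J -> Prop) (L : J -> Type)
    (EL : forall j, L j -> L j -> Prop) j (x y : L j) :
  lexsum_adj H EL (existT L j x) (existT L j y) <-> EL j x y.
Proof.
split; last exact: lexsum_in.
move=> h; inversion h.
  by have <- := inj_pairJ H2; have <- := inj_pairJ H3.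
by subst.
Qed.

Lemma lex_out (J : finType) (H : J -> J -> Prop) (L : J -> Type)
    (EL : forall j, L j -> L j -> Prop) i j (x : L i) (y : L j) :
  i <> j -> (lexsum_adj H EL (existT L i x) (existT L j y) <-> H i j).
Proof.
move=> nij; split; last exact: lexsum_out.
move=> h; inversion h; first by subst.
by subst.
Qed.

Lemma lex_sym (J : finType) (H : J -> J -> Prop) (L : J -> Type)
    (EL : forall j, L j -> L j -> Prop) :
  is_graph H -> (forall j, is_graph (EL j)) ->
  forall a b, lexsum_adj H EL a b -> lexsum_adj H EL b a.
Proof.
move=> [Hs _] hEL a b h; case: h => [j x y e|i j x y n e].
  by apply: lexsum_in; apply: (proj1 (hEL j)).
by apply: lexsum_out; [move=> e'; apply: n|apply: Hs].
Qed.

Lemma lex_irr (J : finType) (H : J -> J -> Prop) (L : J -> Type)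
    (EL : forall j, L j -> L j -> Prop) :
  (forall j, is_graph (EL j)) -> forall a, ~ lexsum_adj H EL a a.
Proof.
move=> hEL [j x] /lex_in; exact: (proj2 (hEL j)).
Qed.

Lemma lex_block (J : finType) (H : J -> J -> Prop) (L : J -> Type)
    (EL : forall j, L j -> L j -> Prop) :
  (forall j, is_clique (EL j) \/ is_independent (EL j)) ->
  forall j (x y : L j), tw (lexsum_adj H EL) (existT L j x) (existT L j y).
Proof.
move=> hCI j x y [k w] n1 n2.
case: (eqVneq k j) => [ekj|nkj].
  subst k.
  have wx : x <> w by move=> e; apply: n1; rewrite e.
  have wy : y <> w by move=> e; apply: n2; rewrite e.
  rewrite !lex_in.
  case: (hCI j) => hc; first by split=> _; apply: hc.
  by split=> e; case: (hc _ _ e).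
have njk : j <> k by move=> e; move/eqP: nkj; apply; rewrite e.
by rewrite !lex_out.
Qed.
Lemma perm_step (V : Type) (K : finType) (cls : V -> K) (phi : V -> V) :
  (forall x y, cls (phi x) = cls (phi y) -> cls x = cls y) ->
  exists2 m, 0 < m & forall x, cls (iter m phi x) = cls x.
Proof.
move=> refl.
pose g c := match pselect (exists x, cls x = c) with
            | left h => cls (phi (sval (cid h))) | right _ => c end.
have gR : forall x, exists2 x1, cls x1 = cls x & g (cls x) = cls (phi x1).
  move=> x; rewrite /g; case: pselect => [h|h]; last by case: h; exists x.
  by exists (sval (cid h)) => //; case: (cid h).
have gN : forall c, ~ (exists x, cls x = c) -> g c = c.
  by move=> c nc; rewrite /g; case: pselect.
have g_inj : injective g.
  move=> c1 c2.
  have [[x1 <-]|n1] := pselect (exists x, cls x = c1);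
  have [[x2 <-]|n2] := pselect (exists x, cls x = c2).
  - have [y1 e1 ->] := gR x1; have [y2 e2 ->] := gR x2.
    by move/refl; rewrite e1 e2.
  - have [y1 e1 ->] := gR x1; rewrite gN // => e; case: n2; by exists (phi y1).
  - have [y2 e2 ->] := gR x2; rewrite gN // => e; case: n1; by exists (phi y2).
  - by rewrite !gN.
pose p := perm g_inj.
have gphi : forall x, cls (phi x) = g (cls x).
  move=> x; set d := cls (phi x).
  have gc : g (p^-1 d)%g = d by rewrite -[g _]permE permKV.
  have [[x1 e1]|n1] := pselect (exists x, cls x = (p^-1 d)%g).
    have [y1 ey gy] := gR x1.
    have h1 : cls (phi y1) = cls (phi x) by rewrite -gy e1 gc.
    have := refl _ _ h1; rewrite ey => hx.
    by rewrite -[in LHS]gc -e1 hx.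
  have := gN _ n1; rewrite gc => e; case: n1; exists (phi x); exact: e.
have it : forall n x, cls (iter n phi x) = iter n g (cls x).
  by elim=> [|n IH] x //=; rewrite gphi IH.
exists #[p]%g; first exact: order_gt0.
move=> x; rewrite it.
have : (p ^+ #[p])%g (cls x) = cls x by rewrite expg_order perm1.
have ip : forall n c, iter n p c = iter n g c.
  by elim=> //= n IH c; rewrite IH permE.
by rewrite permX ip.
Qed.
Lemma sb_step (V : Type) (R : V -> V -> Prop) (psi : V -> V) (S : V -> Prop) :
  (forall x, R x x) -> injective psi -> (forall x, S (psi x)) -> (forall x, R (psi x) x) ->
  exists theta : V -> V, [/\ injective theta, (forall x, S (theta x)),
    (forall s, S s -> exists x, theta x = s) & (forall x, R (theta x) x)].
Proof.
move=> Rr pinj pS pR.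
pose C x := exists n y, ~ S y /\ x = iter n psi y.
pose theta x := if pselect (C x) then psi x else x.
have tin : forall x, C x -> theta x = psi x by move=> x cx; rewrite /theta; case: pselect.
have tout : forall x, ~ C x -> theta x = x by move=> x cx; rewrite /theta; case: pselect.
exists theta; split.
- move=> x y.
  have [cx|nx] := pselect (C x); have [cy|ny] := pselect (C y).
  + by rewrite !tin //; apply: pinj.
  + rewrite tin // tout // => e; case: ny; case: cx => n [z [nz ex]].
    by exists n.+1, z; split => //; rewrite -e ex.
  + rewrite tout // tin // => e; case: nx; case: cy => n [z [nz ey]].
    by exists n.+1, z; split => //; rewrite e ey.
  + by rewrite !tout.
- move=> x; have [cx|nx] := pselect (C x); first by rewrite tin.
  rewrite tout //; have [//|nS] := pselect (S x).
  by case: nx; exists 0, x.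
- move=> s Ss; have [cs|ns] := pselect (C s); last by exists s; rewrite tout.
  case: cs => [[|n] [y [ny e]]]; first by rewrite e in Ss.
  have cy : C (iter n psi y) by exists n, y.
  by exists (iter n psi y); rewrite tin // e.
- move=> x; have [cx|nx] := pselect (C x); first by rewrite tin.
  by rewrite tout.
Qed.

Theorem theorem4p1 (J : finType) (H : J -> J -> Prop) (L : J -> Type)
    (EL : forall j, L j -> L j -> Prop) :
  is_graph H ->
  (forall j, is_graph (EL j)) ->
  (forall j, is_clique (EL j) \/ is_independent (EL j)) ->
  forall (V' : Type) (E' : V' -> V' -> Prop),
    is_graph E' ->
    equimorphic (lexsum_adj H EL) E' ->
    isomorphic (lexsum_adj H EL) E'.
Proof.
move=> HG hEL hCI V' E' _ [[e [einj eE]] [h [hinj hE]]].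
have Es := lex_sym HG hEL.
have Ei := @lex_irr J H L EL hEL.
pose E := lexsum_adj H EL.
pose cls (x : {j : J & L j}) : {set J} :=
  [set j | `[< exists y : L j, tw E (existT L j y) x >]].
have clsP : forall x y, tw E x y <-> cls x = cls y.
  move=> x y; split.
    move=> txy; apply/setP => j; rewrite !inE.
    apply: asbool_equiv_eq; split => -[w hw]; exists w.
      exact: tw_trans Es hw txy.
    exact: tw_trans Es hw (tw_sym txy).
  case: x => j a ec.
  have : j \in cls (existT L j a) by rewrite inE; apply/asboolP; exists a; exact: tw_refl.
  rewrite ec inE => /asboolP [w hw].
  exact: tw_trans Es (@lex_block J H L EL hCI j a w) hw.
pose phi x := h (e x).
have refl : forall x y, cls (phi x) = cls (phi y) -> cls x = cls y.
  move=> x y /clsP t; apply/clsP => z zx zy.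
  apply: iff_trans (eE _ _) _; apply: iff_trans (hE _ _) _.
  apply: iff_trans (t (phi z) _ _) _.
  - by move=> q; apply: zx; apply: einj; apply: hinj.
  - by move=> q; apply: zy; apply: einj; apply: hinj.
  apply: iff_sym; apply: iff_trans (eE _ _) _; exact: hE.
have [m m0 hm] := perm_step refl.
pose psi := iter m phi.
have phinj : injective phi by move=> x y q; apply: einj; apply: hinj.
have itinj : forall k, injective (iter k phi).
  by elim=> [|k IH] x y //= q; apply: IH; apply: phinj.
have psinj : injective psi by exact: itinj.
have psiS : forall x, exists v, h v = psi x.
  move=> x; rewrite /psi; have : 0 < m by [].
  case: (m) => [//|k] _ /=.
  by exists (e (iter k phi x)).
have psiR : forall x, tw E (psi x) x by move=> x; apply/clsP; exact: hm.
have [theta [thinj thS thsurj thR]] :=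
  @sb_step _ (tw E) psi (fun s => exists v, h v = s) (@tw_refl _ E) psinj psiS psiR.
pose f x := sval (cid (thS x)).
have hf : forall x, h (f x) = theta x by move=> x; rewrite /f; case: cid.
pose gi v := sval (cid (thsurj (h v) (ex_intro _ v erefl))).
have hg : forall v, theta (gi v) = h v by move=> v; rewrite /gi; case: cid.
exists f; split.
  exists gi.
    by move=> x; apply: thinj; rewrite hg hf.
  by move=> v; apply: hinj; rewrite hf hg.
move=> x y.
apply: iff_sym; apply: iff_trans (hE _ _) _; rewrite !hf.
have [exy|nxy] := pselect (x = y).
  subst y; split => q; by case: (Ei _ q).
apply: iff_sym; apply: (tw_edge Es (tw_sym (thR x)) (tw_sym (thR y)) nxy).
by move=> q; apply: nxy; apply: thinj.
Qed.
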